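(* Consider the discrete-time logical system $x(k+1)=f(x(k),u(k))$ with $f:\mathbb{B}^{n_x}\times\mathbb{B}^{n_u}\to\mathbb{B}^{n_x}$, where $f$ is given by an expression whose leaves are $Px$, $Qu$ (for fixed selection matrices $P,Q$ with $0/1$ entries, products over $\mathrm{GF}(2)$) or constant binary vectors, and whose internal nodes are componentwise XOR, XNOR, NOT, AND, NAND, OR or NOR between subexpressions of equal dimension. Let $\hat{\mathcal{R}}_0$ be a logical zonotope with $\mathcal{X}_0\subseteq\hat{\mathcal{R}}_0$, and let $\mathcal{U}_k\subseteq\mathbb{B}^{n_u}$ be logical zonotopes for $k\ge0$. Define $\hat{\mathcal{R}}_{k+1}=f(\hat{\mathcal{R}}_k,\mathcal{U}_k)$, where the expression of $f$ is evaluated on logical zonotopes by replacing each leaf $Px$ by $\langle Pc,PG\rangle$ for $\hat{\mathcal{R}}_k=\langle c,G\rangle$ (similarly $Qu$ using $\mathcal{U}_k$), each constant $v$ by $\langle v,[\,]\rangle$, and each operation by its logical-zonotope counterpart: XOR by $\langle c_1\oplus c_2,[G_1,G_2]\rangle$; NOT by $\langle c\oplus\mathbf{1},G\rangle$; XNOR by NOT of XOR; AND by $\langle c_\wedge,G_\wedge\rangle$ with $c_\wedge=c_1c_2$, $G_\wedge=[c_1g_{2,1},\dots,c_1g_{2,\gamma_2},c_2g_{1,1},\dots,c_2g_{1,\gamma_1},g_{1,1}g_{2,1},\dots,g_{1,\gamma_1}g_{2,\gamma_2}]$; NAND by NOT of AND; OR of $\mathcal{L}_1,\mathcal{L}_2$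 by NAND of $\neg\mathcal{L}_1,\neg\mathcal{L}_2$; NOR by NOT of OR. Then for every $N\ge0$, $\hat{\mathcal{R}}_N\supseteq\mathcal{R}_N$, the exact reachable set.
   Context: $\mathbb{B}=\{0,1\}$; $\mathbf{1}$ is the all-ones vector; for binary vectors $\oplus$ is componentwise XOR, $\neg$ negation, $\vee$ OR and juxtaposition $ab$ componentwise AND; for $g\in\mathbb{B}^n$, $\beta\in\mathbb{B}$, $g\beta$ is $g$ if $\beta=1$ and $0$ otherwise. A logical zonotope is $\langle c,G\rangle=\{x\in\mathbb{B}^n: x=c\oplus g_1\beta_1\oplus\cdots\oplus g_\gamma\beta_\gamma,\ \beta_i\in\{0,1\}\}$ for $c\in\mathbb{B}^n$, $G=[g_1,\dots,g_\gamma]\in\mathbb{B}^{n\times\gamma}$; in the operations above $\mathcal{L}_i=\langle c_i,G_i\rangle$ with $G_i=[g_{i,1},\dots,g_{i,\gamma_i}]$. The exact reachable set after $N$ steps from initial set $\mathcal{X}_0\subseteq\mathbb{B}^{n_x}$ with inputs $u(k)\in\mathcal{U}_k$ is $\mathcal{R}_N=\{x(N): x(0)\in\mathcal{X}_0,\ u(k)\in\mathcal{U}_k,\ x(k+1)=f(x(k),u(k))\ \forall k\in\{0,\dots,N-1\}\}$, with $\mathcal{R}_0=\mathcal{X}_0$. *)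

(* Defs.v *)
From mathcomp Require Import all_boot.
Set Implicit Arguments. Unset Strict Implicit. Unset Printing Implicit Defensive.

Definition bvec (n : nat) := 'I_n -> bool.

Definition bxor n (a b : bvec n) : bvec n := fun i => a i (+) b i.
Definition band n (a b : bvec n) : bvec n := fun i => a i && b i.
Definition bones n : bvec n := fun _ => true.
Definition bzero n : bvec n := fun _ => false.

Definition bmul m n (P : 'I_m -> 'I_n -> bool) (x : bvec n) : bvec m :=
  fun i => \big[addb/false]_(j < n) (P i j && x j).

Record lzono (n : nat) := LZ { zc : bvec n; zG : seq (bvec n) }.

Definition zmem n (Z : lzono n) (x : bvec n) : Prop :=
  exists beta : 'I_(size (zG Z)) -> bool,
    forall i, x i = zc Z i (+)
      \big[addb/false]_(k < size (zG Z)) (nth (@bzero n) (zG Z) k i && beta k).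

Definition zxor n (Z1 Z2 : lzono n) : lzono n :=
  LZ (bxor (zc Z1) (zc Z2)) (zG Z1 ++ zG Z2).
Definition znot n (Z : lzono n) : lzono n :=
  LZ (bxor (zc Z) (@bones n)) (zG Z).
Definition zand n (Z1 Z2 : lzono n) : lzono n :=
  LZ (band (zc Z1) (zc Z2))
     ([seq band (zc Z1) g | g <- zG Z2] ++
      [seq band (zc Z2) g | g <- zG Z1] ++
      [seq band g1 g2 | g1 <- zG Z1, g2 <- zG Z2]).
Definition zxnor n (Z1 Z2 : lzono n) := znot (zxor Z1 Z2).
Definition znand n (Z1 Z2 : lzono n) := znot (zand Z1 Z2).
Definition zor n (Z1 Z2 : lzono n) := znand (znot Z1) (znot Z2).
Definition znor n (Z1 Z2 : lzono n) := znot (zor Z1 Z2).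
Definition zlin m n (P : 'I_m -> 'I_n -> bool) (Z : lzono n) : lzono m :=
  LZ (bmul P (zc Z)) [seq bmul P g | g <- zG Z].
Definition zconst n (v : bvec n) : lzono n := LZ v [::].

Inductive lexpr (nx nu : nat) : nat -> Type :=
| EX m (P : 'I_m -> 'I_nx -> bool) : lexpr nx nu m
| EU m (Q : 'I_m -> 'I_nu -> bool) : lexpr nx nu m
| EC m (v : bvec m) : lexpr nx nu m
| EXor m (a b : lexpr nx nu m) : lexpr nx nu m
| EXnor m (a b : lexpr nx nu m) : lexpr nx nu m
| ENot m (a : lexpr nx nu m) : lexpr nx nu m
| EAnd m (a b : lexpr nx nu m) : lexpr nx nu m
| ENand m (a b : lexpr nx nu m) : lexpr nx nu m
| EOr m (a b : lexpr nx nu m) : lexpr nx nu m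
| ENor m (a b : lexpr nx nu m) : lexpr nx nu m.

Fixpoint evalb nx nu m (e : lexpr nx nu m) (x : bvec nx) (u : bvec nu) : bvec m :=
  match e with
  | EX _ P => bmul P x
  | EU _ Q => bmul Q u
  | EC _ v => v
  | EXor _ a b => fun i => evalb a x u i (+) evalb b x u i
  | EXnor _ a b => fun i => ~~ (evalb a x u i (+) evalb b x u i)
  | ENot _ a => fun i => ~~ evalb a x u i
  | EAnd _ a b => fun i => evalb a x u i && evalb b x u i
  | ENand _ a b => fun i => ~~ (evalb a x u i && evalb b x u i)
  | EOr _ a b => fun i => evalb a x u i || evalb b x u i
  | ENor _ a b => fun i => ~~ (evalb a x u i || evalb b x u i)
  end.

Fixpoint evalz nx nu m (e : lexpr nx nu m) (X : lzono nx) (U : lzono nu) : lzono m :=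
  match e with
  | EX _ P => zlin P X
  | EU _ Q => zlin Q U
  | EC _ v => zconst v
  | EXor _ a b => zxor (evalz a X U) (evalz b X U)
  | EXnor _ a b => zxnor (evalz a X U) (evalz b X U)
  | ENot _ a => znot (evalz a X U)
  | EAnd _ a b => zand (evalz a X U) (evalz b X U)
  | ENand _ a b => znand (evalz a X U) (evalz b X U)
  | EOr _ a b => zor (evalz a X U) (evalz b X U)
  | ENor _ a b => znor (evalz a X U) (evalz b X U)
  end.

Definition reach nx nu (f : lexpr nx nu nx) (X0 : bvec nx -> Prop)
    (Us : nat -> bvec nu -> Prop) (N : nat) (x : bvec nx) : Prop :=
  exists (xs : nat -> bvec nx) (us : nat -> bvec nu),
    [/\ X0 (xs 0%N),
        (forall k, k < N -> Us k (us k)),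
        (forall k, k < N -> xs k.+1 = evalb f (xs k) (us k))
      & x = xs N].

Fixpoint Rhat nx nu (f : lexpr nx nu nx) (R0 : lzono nx) (U : nat -> lzono nu)
    (k : nat) : lzono nx :=
  match k with
  | 0 => R0
  | k'.+1 => evalz f (Rhat f R0 U k') (U k')
  end.

(* Main.v *)
Require Import Defs.
From mathcomp Require Import all_boot.
Set Implicit Arguments. Unset Strict Implicit.

Fixpoint gs {n} (G : seq (bvec n)) (b : nat -> bool) (i : 'I_n) : bool :=
  match G with
  | [::] => false
  | g :: G' => (g i && b 0) (+) gs G' (fun k => b k.+1) i
  end.

Definition zm n (Z : lzono n) (x : bvec n) : Prop :=
  exists b : nat -> bool, forall i, x i = zc Z i (+) gs (zG Z) b i.

Lemma gs_ext n (G : seq (bvec n)) b b' i :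
  (forall k, b k = b' k) -> gs G b i = gs G b' i.
Proof.
elim: G b b' => [//|g G IH] b b' H /=.
by rewrite H (IH _ (fun k => b' k.+1)).
Qed.

Lemma big_gs n (G : seq (bvec n)) (b : nat -> bool) i :
  \big[addb/false]_(k < size G) (nth (@bzero n) G k i && b k) = gs G b i.
Proof.
elim: G b => [|g G IH] b /=; first by rewrite big_ord0.
by rewrite big_ord_recl /= -IH.
Qed.

Lemma zmem_zm n (Z : lzono n) x : zmem Z x <-> zm Z x.
Proof.
split.
- move=> [beta H]; exists (fun k => oapp beta false (insub k)) => i.
  rewrite H -big_gs; congr (_ (+) _); apply: eq_bigr => j _.
  case: insubP => [j' _ /val_inj -> //|]; by rewrite ltn_ord.
- move=> [b H]; exists (fun j => b j) => i; by rewrite H -big_gs.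
Qed.

Definition bcat (n : nat) (b1 b2 : nat -> bool) k := if k < n then b1 k else b2 (k - n).

Lemma gs_cat n (G1 G2 : seq (bvec n)) b1 b2 i :
  gs (G1 ++ G2) (bcat (size G1) b1 b2) i = gs G1 b1 i (+) gs G2 b2 i.
Proof.
elim: G1 b1 => [|g G1 IH] b1 /=.
  by apply: gs_ext => k; rewrite /bcat subn0.
rewrite (gs_ext _ _ (b' := bcat (size G1) (fun k => b1 k.+1) b2)); last first.
  by move=> k; rewrite /bcat ltnS subSS.
by rewrite IH addbA.
Qed.

Lemma gs_map_and n (c : bvec n) G b i :
  gs [seq band c g | g <- G] b i = c i && gs G b i.
Proof.
elim: G b => [|g G IH] b /=; first by rewrite andbF.
by rewrite IH /band andb_addr andbA.
Qed.

Lemma bmul_xor m n (P : 'I_m -> 'I_n -> bool) x y i :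
  bmul P (fun j => x j (+) y j) i = bmul P x i (+) bmul P y i.
Proof.
rewrite /bmul -big_split /=; apply: eq_bigr => j _; by rewrite andb_addr.
Qed.

Lemma bmul_andc m n (P : 'I_m -> 'I_n -> bool) x c i :
  bmul P (fun j => x j && c) i = bmul P x i && c.
Proof.
case: c.
  by rewrite andbT /bmul; apply: eq_bigr => j _; rewrite andbT.
rewrite andbF /bmul; apply: big1 => j _; by rewrite !andbF.
Qed.

Lemma gs_map_mul m n (P : 'I_m -> 'I_n -> bool) G b i :
  gs [seq bmul P g | g <- G] b i = bmul P (fun j => gs G b j) i.
Proof.
elim: G b => [|g G IH] b /=.
  by rewrite /bmul; symmetry; apply: big1 => j _; rewrite !andbF.
by rewrite IH bmul_xor bmul_andc.
Qed.

Lemma gs_andc n (G : seq (bvec n)) b c i :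
  gs G (fun l => b l && c) i = gs G b i && c.
Proof.
elim: G b => [|h G IH] b /=; first by [].

rewrite IH andb_addl; by rewrite andbA.
Qed.

Lemma gs_pairs n (G1 G2 : seq (bvec n)) b1 b2 :
  exists b, forall i, gs [seq band g1 g2 | g1 <- G1, g2 <- G2] b i =
                      gs G1 b1 i && gs G2 b2 i.
Proof.
elim: G1 b1 => [|g G1 IH] b1 /=; first by exists b1.
have [b' Hb'] := IH (fun k => b1 k.+1).
exists (bcat (size [seq band g g2 | g2 <- G2]) (fun l => b1 0 && b2 l) b') => i.
rewrite gs_cat Hb'.
rewrite (gs_ext _ _ (b' := fun l => b2 l && b1 0)); last by move=> k; rewrite andbC.
rewrite gs_map_and andb_addl; congr (_ (+) _).
rewrite gs_andc; by case: (b1 0); case: (g i); case: (gs G2 b2 i).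
Qed.

Lemma zm_ext n (Z : lzono n) x y : (forall i, x i = y i) -> zm Z x -> zm Z y.
Proof. move=> E [b H]; exists b => i; by rewrite -E. Qed.

Lemma zm_const n (v : bvec n) : zm (zconst v) v.
Proof. exists (fun _ => false) => i /=; by rewrite addbF. Qed.

Lemma zm_lin m n (P : 'I_m -> 'I_n -> bool) Z x : zm Z x -> zm (zlin P Z) (bmul P x).
Proof.
move=> [b H]; exists b => i /=; rewrite gs_map_mul -bmul_xor.
rewrite /bmul; apply: eq_bigr => j _; by rewrite H.
Qed.

Lemma zm_xor n (Z1 Z2 : lzono n) x y :
  zm Z1 x -> zm Z2 y -> zm (zxor Z1 Z2) (fun i => x i (+) y i).
Proof.
move=> [b1 H1] [b2 H2]; exists (bcat (size (zG Z1)) b1 b2) => i /=.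
rewrite gs_cat H1 H2 /bxor.
by rewrite -!addbA; congr (_ (+) _); rewrite addbC -!addbA; congr (_ (+) _); rewrite addbC.
Qed.

Lemma zm_not n (Z : lzono n) x : zm Z x -> zm (znot Z) (fun i => ~~ x i).
Proof.
move=> [b H]; exists b => i /=; rewrite H /bxor /bones.
by rewrite -addbA (addbC true) addbA addbT.
Qed.

Lemma zm_and n (Z1 Z2 : lzono n) x y :
  zm Z1 x -> zm Z2 y -> zm (zand Z1 Z2) (fun i => x i && y i).
Proof.
move=> [b1 H1] [b2 H2].
have [b3 H3] := gs_pairs (zG Z1) (zG Z2) b1 b2.
exists (bcat (size [seq band (zc Z1) g | g <- zG Z2]) b2
          (bcat (size [seq band (zc Z2) g | g <- zG Z1]) b1 b3)) => i /=.
rewrite !gs_cat H3 !gs_map_and H1 H2 /band.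
case: (zc Z1 i); case: (zc Z2 i); case: (gs (zG Z1) b1 i); case: (gs (zG Z2) b2 i) => //.
Qed.

Lemma zm_eval nx nu m (e : lexpr nx nu m) X U x u :
  zm X x -> zm U u -> zm (evalz e X U) (evalb e x u).
Proof.
move=> HX HU.
elim: e => /= {m}.
- move=> m P; exact: zm_lin.
- move=> m Q; exact: zm_lin.
- move=> m v; exact: zm_const.
- move=> m a Ha b Hb; exact: zm_xor.
- move=> m a Ha b Hb; apply: zm_not; exact: zm_xor.
- move=> m a Ha; exact: zm_not.
- move=> m a Ha b Hb; exact: zm_and.
- move=> m a Ha b Hb; apply: zm_not; exact: zm_and.
- move=> m a Ha b Hb; apply: (zm_ext (x := fun i => ~~ (~~ evalb a x u i && ~~ evalb b x u i))).
    by move=> i; rewrite negb_and !negbK.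
  apply: zm_not; apply: zm_and; exact: zm_not.
- move=> m a Ha b Hb; apply: zm_not.
  apply: (zm_ext (x := fun i => ~~ (~~ evalb a x u i && ~~ evalb b x u i))).
    by move=> i; rewrite negb_and !negbK.
  apply: zm_not; apply: zm_and; exact: zm_not.
Qed.

Theorem theorem1 (nx nu : nat) (f : lexpr nx nu nx) (X0 : bvec nx -> Prop)
    (R0 : lzono nx) (U : nat -> lzono nu) :
  (forall x, X0 x -> zmem R0 x) ->
  forall (N : nat) (x : bvec nx),
    reach f X0 (fun k => zmem (U k)) N x -> zmem (Rhat f R0 U N) x.
Proof.
move=> H0 N x [xs [us [Hx0 HU Hstep ->]]].
suff: forall k, k <= N -> zm (Rhat f R0 U k) (xs k) by move=> /(_ N (leqnn N)) /zmem_zm.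
elim=> [_|k IH Hk] /=; first by apply/zmem_zm; exact: H0.
rewrite Hstep //; apply: zm_eval; first exact: IH (ltnW Hk).
by apply/zmem_zm; exact: HU.
Qed.
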